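(* Let $G$ be a graph and let $x$ be a vertex of odd degree in $G$ such that the subgraph induced by the neighbours of $x$ is a path $P$. Then in any proper $3$-colouring of $G$, the two end-points of $P$ receive the same colour.
   Context: A proper $3$-colouring assigns to each vertex one of three colours so that adjacent vertices receive different colours. *)

(* Defs.v *)
From mathcomp Require Import all_boot.
Set Implicit Arguments. Unset Strict Implicit. Unset Printing Implicit Defensive.

Definition simple_graph (T : finType) (e : rel T) : Prop :=
  symmetric e /\ irreflexive e.

Definition nbhd (T : finType) (e : rel T) (x : T) : {set T} := [set y | e x y].
Definition degree (T : finType) (e : rel T) (x : T) : nat := #|nbhd e x|.

Definition induced_path (T : finType) (e : rel T) (p : seq T) : Prop :=
  uniq p /\
  forall i j : 'I_(size p),
    e (tnth (in_tuple p) i) (tnth (in_tuple p) j) = (i.+1 == j) || (j.+1 == i).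

Definition induces_path (T : finType) (e : rel T) (S : {set T}) (p : seq T) : Prop :=
  induced_path e p /\ (forall y, (y \in p) = (y \in S)).

Definition proper_colouring (T : finType) (e : rel T) (k : nat) (c : T -> 'I_k) : Prop :=
  forall u v, e u v -> c u != c v.

(* Main.v *)
Require Import Defs.
From mathcomp Require Import all_boot.

Lemma three_col (a b d z : 'I_3) :
  a != z -> b != z -> d != z -> a != b -> b != d -> a = d.
Proof.
case: a => [[|[|[|?]]] Ha] //; case: b => [[|[|[|?]]] Hb] //;
case: d => [[|[|[|?]]] Hd] //; case: z => [[|[|[|?]]] Hz] //;
rewrite /eq_op /= ?(@val_inj _ _ _ (Ordinal _) (Ordinal _)) //;
move=> *; exact: val_inj.
Qed.

Theorem lemma1 (T : finType) (e : rel T) (x : T) (p : seq T) (c : T -> 'I_3) :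
  simple_graph e ->
  odd (degree e x) ->
  induces_path e (nbhd e x) p ->
  proper_colouring e c ->
  c (head x p) = c (last x p).
Proof.
move=> [esym eirr] Hodd [[Hu Hp] Hmem] Hc.
have Hsz : degree e x = size p.
  rewrite /degree -(card_uniqP Hu); apply: eq_card => y; by rewrite Hmem.
have Hnx : forall i, i < size p -> c (nth x p i) != c x.
  move=> i Hi; have : nth x p i \in nbhd e x by rewrite -Hmem mem_nth.
  rewrite inE => Hxy; rewrite eq_sym; exact: Hc.
have Hadj : forall i, i.+1 < size p -> c (nth x p i) != c (nth x p i.+1).
  move=> i Hi; apply: Hc.
  have Hi0 : i < size p by apply: ltnW.
  have := Hp (Ordinal Hi0) (Ordinal Hi).
  rewrite !(tnth_nth x) /= eqxx => ->; done.
have Hstep : forall i, i.+2 < size p -> c (nth x p i) = c (nth x p i.+2).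
  move=> i Hi; apply: (@three_col _ _ _ (c x)).
  - by apply: Hnx; apply: ltn_trans (ltn_trans (ltnSn _) (ltnSn _)) Hi.
  - by apply: Hnx; apply: ltn_trans (ltnSn _) Hi.
  - by apply: Hnx.
  - by apply: Hadj; apply: ltn_trans (ltnSn _) Hi.
  - by apply: Hadj.
have Hev : forall k, k.*2 < size p -> c (nth x p k.*2) = c (nth x p 0).
  elim=> [//|k IH] Hk; rewrite doubleS -Hstep; last by [].
  by apply: IH; apply: ltn_trans Hk; rewrite doubleS ltnS ltnW.
rewrite Hsz in Hodd.
case: p Hsz Hodd Hu Hp Hmem Hnx Hadj Hstep Hev => [//|y s] _ Hodd _ _ _ _ _ _ Hev.
rewrite -nth_last /= .
have -> : size s = (size s)./2.*2.
  by rewrite -{1}(odd_double_half (size s)); move: Hodd => /= /negPf ->.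
by rewrite (Hev (size s)./2) //= -{2}(odd_double_half (size s)); move: Hodd => /= /negPf ->.
Qed.
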